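(* For all integers $m,k\ge 0$, $$\int_0^{\pi/2} x^{2m}\frac{\sin(2kx)}{\sin(x)}\,dx=2(2m)!\sum_{j=0}^m\frac{(-1)^j\,\overline{O}_k^{(2j+1)}}{(2m-2j)!}\left(\frac{\pi}{2}\right)^{2m-2j}.$$
   Context: For integers $k\ge 0$ and $r\ge1$, the alternating odd harmonic number is $\overline{O}_k^{(r)}=\sum_{i=1}^k\frac{(-1)^{i-1}}{(2i-1)^r}$ (empty sum $=0$). *)

(* Defs.v *)
From Stdlib Require Import Reals.
From Coquelicot Require Import Coquelicot.
Open Scope R_scope.

(* Alternating odd harmonic number:
   altOddHarm k r = sum_{i=1}^k (-1)^(i-1) / (2i-1)^r  (empty sum = 0). *)
Fixpoint altOddHarm (k r : nat) : R :=
  match k with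
  | O => 0
  | S k' => altOddHarm k' r + (-1) ^ k' / (INR (2 * k' + 1)) ^ r
  end.

(* Main.v *)
Require Import Defs.
From Stdlib Require Import Reals Lra Lia.
From Coquelicot Require Import Coquelicot.
Open Scope R_scope.

Fixpoint A (a : R) (m : nat) (x : R) : R :=
 match m with
 | O => sin (a*x) / a
 | S m' => x^(2*m'+2) * sin(a*x)/a + INR(2*m'+2) * x^(2*m'+1) * cos(a*x)/(a*a)
           - INR(2*m'+2)*INR(2*m'+1)/(a*a) * A a m' x
 end.

Lemma A_der a m x : a <> 0 -> is_derive (A a m) x (x^(2*m) * cos(a*x)).
Proof.
intros Ha. revert x. induction m as [|m IH]; intros x.
- simpl. auto_derive; auto. field; auto.
- simpl A.
  apply (is_derive_ext (fun x => (x^(2*m+2) * sin(a*x)/a + INR(2*m+2) * x^(2*m+1) * cos(a*x)/(a*a))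
           - INR(2*m+2)*INR(2*m+1)/(a*a) * A a m x)).
  { intros; reflexivity. }
  replace (x ^ (2 * S m) * cos (a * x)) with
   ((x^(2*m+2) * cos(a*x) + INR(2*m+2)*INR(2*m+1)/(a*a) * (x^(2*m) * cos(a*x))) - INR(2*m+2)*INR(2*m+1)/(a*a) * (x^(2*m) * cos(a*x))).
  2: { replace (2 * S m)%nat with (2*m+2)%nat by lia. ring. }
  apply (is_derive_minus _ (fun x => INR(2*m+2)*INR(2*m+1)/(a*a) * A a m x)).
  + auto_derive. auto.
    replace (Init.Nat.pred (m + (m + 0) + 2)) with (2*m+1)%nat by lia.
    replace (Init.Nat.pred (m + (m + 0) + 1)) with (2*m)%nat by lia.
    replace (m + (m + 0) + 2)%nat with (2*m+2)%nat by lia.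
    replace (m + (m + 0) + 1)%nat with (2*m+1)%nat by lia.
    replace (x^(2*m+2)) with (x^(2*m)*x*x) by (rewrite pow_add; simpl; ring).
    replace (x^(2*m+1)) with (x^(2*m)*x) by (rewrite pow_add; simpl; ring).
    field. auto.
  + apply (is_derive_scal (A a m)). apply IH.
Qed.

Lemma A_0 a m : A a m 0 = 0.
Proof.
induction m as [|m IH]; simpl A.
- rewrite Rmult_0_r, sin_0. unfold Rdiv; ring.
- rewrite IH, Rmult_0_r, sin_0, !pow_i; try lia. unfold Rdiv; ring.
Qed.

Lemma sincos k : sin (INR (2*k+1) * (PI/2)) = (-1)^k /\ cos (INR (2*k+1) * (PI/2)) = 0.
Proof.
induction k as [|k [IH1 IH2]].
- simpl. rewrite Rmult_1_l, sin_PI2, cos_PI2. auto.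
- replace (INR (2 * S k + 1) * (PI / 2)) with (INR (2*k+1) * (PI/2) + PI).
  2: { rewrite !plus_INR, !mult_INR, S_INR. replace (INR 2) with 2 by (simpl; ring). replace (INR 1) with 1 by reflexivity. rewrite S_INR. field. }
  rewrite neg_sin, neg_cos, IH1, IH2. simpl. split; ring.
Qed.

Lemma A_b a m s : a <> 0 -> sin (a * (PI/2)) = s -> cos (a * (PI/2)) = 0 ->
  A a m (PI/2) = s * INR (Factorial.fact (2*m)) *
    sum_f_R0 (fun j => (-1)^j / a^(2*j+1) / INR (Factorial.fact (2*m-2*j)) * (PI/2)^(2*m-2*j)) m.
Proof.
intros Ha Hs Hc. induction m as [|m IH].
- simpl A. simpl. rewrite Hs. field. auto.
- simpl A. rewrite IH, Hs, Hc.
  replace (m + (m + 0) + 2)%nat with (2*m+2)%nat by lia. replace (m + (m + 0) + 1)%nat with (2*m+1)%nat by lia.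
  rewrite (decomp_sum _ (S m)) by lia. simpl pred.
  rewrite (sum_eq (fun i => (-1)^(S i) / a^(2*S i+1) / INR (Factorial.fact (2*S m - 2*S i)) * (PI/2)^(2*S m - 2*S i))
     (fun i => ((-1)^i / a^(2*i+1) / INR (Factorial.fact (2*m - 2*i)) * (PI/2)^(2*m - 2*i)) * (-1/(a*a)))).
  2: { intros i _. replace (2*S m - 2*S i)%nat with (2*m-2*i)%nat by lia.
       replace (2*S i+1)%nat with (S (S (2*i+1))) by lia. simpl pow.
       field; repeat split; try apply INR_fact_neq_0; try apply pow_nonzero; auto. }
  rewrite <- scal_sum.
  replace (2 * S m - 2 * 0)%nat with (S (S (2*m))) by lia.
  replace (2 * S m)%nat with (S (S (2*m))) by lia.
  replace (2*m+2)%nat with (S (S (2*m))) by lia.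
  rewrite !fact_simpl, !mult_INR.
  replace ((-1)^0) with 1 by reflexivity.
  replace (2*0+1)%nat with 1%nat by reflexivity.
  replace (2*m+1)%nat with (S (2*m)) by lia.
  field; repeat split; try apply INR_fact_neq_0; try apply not_0_INR; try lia; auto.
Qed.

Fixpoint Cs (k : nat) (x : R) : R :=
  match k with O => 0 | S k' => Cs k' x + cos (INR (2*k'+1) * x) end.

Lemma sin_id k x : sin (2 * INR k * x) = 2 * sin x * Cs k x.
Proof.
induction k as [|k IH].
- simpl. rewrite Rmult_0_r, Rmult_0_l, sin_0. ring.
- simpl Cs. rewrite Rmult_plus_distr_l, <- IH.
  replace (2 * INR (S k) * x) with (INR (2*k+1) * x + x).
  2: { rewrite plus_INR, mult_INR, (S_INR k). simpl. ring. }
  replace (2 * INR k * x) with (INR (2*k+1) * x - x).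
  2: { rewrite plus_INR, mult_INR. simpl. ring. }
  rewrite sin_plus, sin_minus. replace (k + (k + 0) + 1)%nat with (2*k+1)%nat by lia. ring.
Qed.

Lemma piece m a : a <> 0 ->
  is_RInt (fun x => x^(2*m) * cos (a*x)) 0 (PI/2) (A a m (PI/2) - A a m 0).
Proof.
intros Ha.
apply (is_RInt_derive (A a m) (fun x => x^(2*m) * cos (a*x))).
- intros x _. apply A_der. auto.
- intros x _. apply (ex_derive_continuous (K:=R_AbsRing) (V:=R_NormedModule) (fun x => x^(2*m) * cos (a*x))). auto_derive. auto.
Qed.

Lemma sum_split (a b c d e : nat -> R) s m :
  sum_f_R0 (fun j => a j * (b j + s / c j) / d j * e j) m =
  sum_f_R0 (fun j => a j * b j / d j * e j) m + s * sum_f_R0 (fun j => a j / c j / d j * e j) m.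
Proof.
rewrite scal_sum, <- plus_sum. apply sum_eq. intros. unfold Rdiv; ring.
Qed.

Definition RHS m k := 2 * INR (Factorial.fact (2 * m)) *
     sum_f_R0 (fun j : nat =>
        (-1) ^ j * altOddHarm k (2 * j + 1) / INR (Factorial.fact (2 * m - 2 * j))
        * (PI / 2) ^ (2 * m - 2 * j)) m.

Lemma main_k m k : is_RInt (fun x => x^(2*m) * (2 * Cs k x)) 0 (PI/2) (RHS m k).
Proof.
induction k as [|k IH].
- replace (RHS m 0) with (scal (PI/2 - 0) (0:R)).
  2: { unfold RHS. rewrite sum_eq_R0. unfold scal; simpl; unfold mult; simpl. ring.
       intros n _. simpl. unfold Rdiv; ring. }
  apply (is_RInt_ext (fun _ => 0)). { intros x _. simpl. ring. }
  apply (is_RInt_const (V:=R_NormedModule)).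
- assert (Ha : INR (2*k+1) <> 0) by (apply not_0_INR; lia).
  destruct (sincos k) as [Hs Hc].
  pose proof (is_RInt_plus _ _ _ _ _ _ IH (is_RInt_scal _ _ _ 2 _ (piece m _ Ha))) as H.
  rewrite (A_b _ m _ Ha Hs Hc), A_0 in H.
  replace (RHS m (S k)) with (plus (RHS m k) (scal 2 ((-1) ^ k * INR (Factorial.fact (2 * m)) *
       sum_f_R0 (fun j : nat => (-1) ^ j / INR (2 * k + 1) ^ (2 * j + 1) / INR (Factorial.fact (2 * m - 2 * j)) *
            (PI / 2) ^ (2 * m - 2 * j)) m - 0))).
  2: { unfold RHS, scal, plus; simpl; unfold mult, plus; simpl.
       rewrite (sum_split (fun j => (-1)^j) (fun j => altOddHarm k (j + (j + 0) + 1))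
         (fun j => INR (k + (k + 0) + 1) ^ (j + (j + 0) + 1))
         (fun j => INR (Factorial.fact (m + (m + 0) - (j + (j + 0)))))
         (fun j => (PI / 2) ^ (m + (m + 0) - (j + (j + 0))))).
       ring. }
  revert H. apply is_RInt_ext. intros x _. simpl Cs. unfold scal, plus; simpl; unfold mult, plus; simpl. ring.
Qed.

Theorem lemma1 (m k : nat) :
  is_RInt (fun x : R => x ^ (2 * m) * (sin (2 * INR k * x) / sin x)) 0 (PI / 2)
    (2 * INR (Factorial.fact (2 * m)) *
     sum_f_R0 (fun j : nat =>
        (-1) ^ j * altOddHarm k (2 * j + 1) / INR (Factorial.fact (2 * m - 2 * j))
        * (PI / 2) ^ (2 * m - 2 * j)) m).
Proof.
apply (is_RInt_ext (fun x => x^(2*m) * (2 * Cs k x))).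
- intros x Hx. pose proof PI_RGT_0.
  rewrite Rmin_left, Rmax_right in Hx by lra.
  assert (0 < sin x) by (apply sin_gt_0; lra).
  rewrite sin_id. apply Rmult_eq_compat_l. field. lra.
- apply main_k.
Qed.
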